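(* For every integer $m\geq 0$, $\Lambda_m\subseteq S_m$.
   Context: $\mathbb{N}=\{1,2,3,\dots\}$, $\mathbb{N}_0=\mathbb{N}\cup\{0\}$. The Collatz map $T:\mathbb{N}\to\mathbb{N}$ is $T(n)=\frac{3n+1}{2}$ if $n$ is odd and $T(n)=\frac{n}{2}$ if $n$ is even; $T^{(k)}$ denotes the $k$-fold composition. The total stopping time is $\sigma_\infty(1)=0$ and, for $n\geq 2$, $\sigma_\infty(n)=\inf\{k\in\mathbb{N}\cup\{\infty\} : T^{(k)}(n)=1\}$. Let $S_0=\{1\}$ and $S_k=\{n\in\mathbb{N}:\sigma_\infty(n)=k\}$ for $k\geq 1$. For $0\leq m\leq 3$ let $\Lambda_m=\{2^m\}$, and for $m\geq 4$ let $\Lambda_m$ be the set of all $n\in\mathbb{N}$ that can be written as $n=\frac{2^m}{3^l}-\sum_{k=1}^{l}\frac{2^{b_k}}{3^k}$ for some integers $l,b_1,\dots,b_l\in\mathbb{N}_0$ with $0\leq l\leq m-3$ and $0\leq b_1<b_2<\cdots<b_l\leq m-4$. *)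

(* Defs.v *)
From mathcomp Require Import all_boot all_order all_algebra.
Set Implicit Arguments. Unset Strict Implicit. Unset Printing Implicit Defensive.
Import Order.TTheory GRing.Theory Num.Theory.

Definition collatzT (n : nat) : nat :=
  if odd n then (3 * n + 1)./2 else n./2.

Definition sigma_inf_is (n k : nat) : Prop :=
  (n = 1%N /\ k = 0%N) \/
  [/\ (2 <= n)%N, (1 <= k)%N, iter k collatzT n = 1%N &
      forall j : nat, (1 <= j < k)%N -> iter j collatzT n <> 1%N].

Definition in_S (k n : nat) : Prop := (0 < n)%N /\ sigma_inf_is n k.

Definition in_Lambda (m n : nat) : Prop :=
  if (m <= 3)%N then n = (2 ^ m)%N
  else (0 < n)%N /\
       exists (l : nat) (b : nat -> nat),
         [/\ (l <= m - 3)%N,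
             (forall k : nat, (1 <= k < l)%N -> (b k < b k.+1)%N),
             (forall k : nat, (1 <= k <= l)%N -> (b k <= m - 4)%N) &
             (n%:R : rat) = (2 ^ m)%:R / (3 ^ l)%:R
                            - \sum_(1 <= k < l.+1) (2 ^ b k)%:R / (3 ^ k)%:R]%R.

(* Main.v *)
Require Import Defs.
From mathcomp Require Import all_boot all_order all_algebra.
From mathcomp Require Import zify.
Import Order.TTheory GRing.Theory Num.Theory.

Definition Ssum (l : nat) (b : nat -> nat) : nat :=
  \sum_(1 <= k < l.+1) 2 ^ b k * 3 ^ (l - k).

Lemma half_even x : odd x = false -> x = 2 * x./2.
Proof. by move=> h; rewrite {1}[x](esym (odd_double_half x)) h mul2n. Qed.

Lemma Ssum_even l b : (forall k, 1 <= k <= l -> 1 <= b k) ->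
  Ssum l b = 2 * Ssum l (fun k => b k - 1).
Proof.
move=> hb; rewrite /Ssum big_distrr /=; apply: eq_big_nat => k hk.
by rewrite mulnA -expnS subn1 prednK // (hb k hk).
Qed.

Lemma Ssum_odd l b : b 1 = 0 -> (forall k, 2 <= k <= l.+1 -> 1 <= b k) ->
  Ssum l.+1 b = 3 ^ l + 2 * Ssum l (fun k => b k.+1 - 1).
Proof.
move=> h0 hb; rewrite /Ssum big_nat_recl // h0 subSS subn0 expn0 mul1n.
congr (_ + _); rewrite big_distrr /=; apply: eq_big_nat => k /andP[k1 k2].
rewrite subSS mulnA -expnS subn1 prednK //; apply: hb; lia.
Qed.

Lemma mono l b : (forall k, 1 <= k < l -> b k < b k.+1) ->
  forall k, 1 <= k <= l -> b 1 + (k - 1) <= b k.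
Proof.
move=> hm; elim=> [|k IH] hk; first lia.
case: k IH hk => [|k] IH hk; first lia.
have := hm k.+1 ltac:(lia). have := IH ltac:(lia). lia.
Qed.

Lemma key N : forall n l b,
  (forall k, 1 <= k < l -> b k < b k.+1) ->
  (forall k, 1 <= k <= l -> b k < N) ->
  n * 3 ^ l + Ssum l b = 2 ^ (N + 3) ->
  iter N collatzT n = 8.
Proof.
elim: N => [|N IH] n l b hm hb he.
  case: l hm hb he => [|l] hm hb he.
    by move: he; rewrite /Ssum big_geq // expn0 muln1 addn0.
  by have := hb 1 ltac:(lia).
have hmo := @mono l b hm.
have Even : (forall k, 1 <= k <= l -> 1 <= b k) -> iter N.+1 collatzT n = 8.
  move=> h1; move: he; rewrite Ssum_even // => he.
  have ho : odd n = false.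
    have : odd (n * 3 ^ l + 2 * Ssum l (fun k => b k - 1)) = false.
      by rewrite he addSn expnS oddM.
    by rewrite oddD oddM oddX orbT andbT oddM /= addbF.
  rewrite iterSr /collatzT ho.
  apply: (IH _ l (fun k => b k - 1)).
  - move=> k hk; have := hm k hk; have := h1 k ltac:(lia); have := h1 k.+1 ltac:(lia); lia.
  - move=> k hk; have := hb k hk; have := h1 k hk; lia.
  - move: he; rewrite {1}(@half_even n ho) addSn expnS.
    set h := n./2; set S := Ssum _ _; set P := 3 ^ l; set Q := 2 ^ (N + 3); nia.
case: l hm hb he hmo Even => [|l] hm hb he hmo Even.
  by apply: Even => k; lia.
case hb1 : (b 1) => [|c]; last first.
  apply: Even => k hk; have := hmo k hk; rewrite hb1; lia.
have h1 : forall k, 2 <= k <= l.+1 -> 1 <= b k.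
  by move=> k hk; have := hmo k ltac:(lia); rewrite hb1; lia.
move: he; rewrite Ssum_odd // => he.
set S := Ssum _ _ in he.
have ho : odd (3 * n + 1) = false.
  have : odd (3 ^ l * (3 * n + 1) + 2 * S) = false.
    have -> : 3 ^ l * (3 * n + 1) + 2 * S = n * 3 ^ l.+1 + (3 ^ l + 2 * S).
      by rewrite expnS; lia.
    by rewrite he addSn expnS oddM.
  by rewrite oddD oddM oddX orbT /= oddM /= addbF.
have hn : odd n = true.
  by move: ho; rewrite oddD oddM /=; case: (odd n).
rewrite iterSr /collatzT hn.
apply: (IH _ l (fun k => b k.+1 - 1)).
- move=> k hk; have := hm k.+1 ltac:(lia); have := h1 k.+1 ltac:(lia); have := h1 k.+2 ltac:(lia); lia.
- move=> k hk; have := hb k.+1 ltac:(lia); have := h1 k.+1 ltac:(lia); lia.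
- move: he; have E := @half_even _ ho; rewrite expnS addSn expnS.
  set h := (3 * n + 1)./2 in E *; set P := 3 ^ l; set Q := 2 ^ (N + 3); rewrite -/S. have EP : P * (3 * n + 1) = P * (2 * h) by rewrite E. nia.
Qed.

Lemma iter1 j : iter j collatzT 1 = 1 \/ iter j collatzT 1 = 2.
Proof.
elim: j => [|j IH]; first by left.
by rewrite iterS; case: IH => ->; [right|left].
Qed.

Lemma rat_to_nat m n l (b : nat -> nat) :
  (n%:R : rat) = ((2 ^ m)%:R / (3 ^ l)%:R
     - \sum_(1 <= k < l.+1) (2 ^ b k)%:R / (3 ^ k)%:R)%R ->
  n * 3 ^ l + Ssum l b = 2 ^ m.
Proof.
move=> heq; apply/eqP; rewrite -(eqr_nat rat) natrD natrM; apply/eqP.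
have nz : forall k, ((3 ^ k)%:R : rat) != 0%R.
  by move=> k; rewrite pnatr_eq0 expn_eq0.
have hs : ((Ssum l b)%:R : rat) =
   (\sum_(1 <= k < l.+1) (2 ^ b k)%:R / (3 ^ k)%:R * (3 ^ l)%:R)%R.
  rewrite /Ssum natr_sum; apply: eq_big_nat => k /andP[_ hk] /=.
  have -> : ((3 ^ l)%:R : rat) = ((3 ^ k)%:R * (3 ^ (l - k))%:R)%R.
    by rewrite -natrM -expnD subnKC.
  by rewrite natrM mulrA divfK.
by rewrite hs -big_distrl /= heq mulrBl divfK // subrK.
Qed.

Theorem mainTheorem2 : forall (m n : nat), in_Lambda m n -> in_S m n.
Proof.
move=> m n; rewrite /in_Lambda /in_S /sigma_inf_is.
case: ifP => hm.
  move=> ->; split; first by rewrite expn_gt0.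
  case: m hm => [|[|[|[|m]]]] // _; [by left| | |]; right; split => //;
    move=> j /andP[h1 h2]; [lia| |]; case: j h1 h2 => [|[|[|j]]] //.
move=> [n0 [l [b [hl hmon hbd heq]]]].
have h8 : iter (m - 3) collatzT n = 8.
  have hm4 : 3 < m by move/negbT: hm; rewrite -ltnNge.
  have hb' : forall k, 1 <= k <= l -> b k < m - 3.
    by move=> k hk; have := hbd k hk; lia.
  have he : n * 3 ^ l + Ssum l b = 2 ^ (m - 3 + 3).
    rewrite subnK; [exact: rat_to_nat heq | lia].
  exact: (@key (m - 3) n l b hmon hb' he).
have n1 : n <> 1.
  by move=> E; move: h8; rewrite E; case: (iter1 (m - 3)) => ->.
have it : forall j, m - 3 <= j -> iter j collatzT n = iter (j - (m - 3)) collatzT 8.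
  by move=> j hj; rewrite -h8 -iterD subnK.
split => //; right; split; first by lia.
- lia.
- by rewrite it ?subKn //; lia.
- move=> j /andP[h1 h2].
  case: (leqP (m - 3) j) => hj.
    rewrite it //.
    have : j - (m - 3) < 3 by lia.
    by case: (j - (m - 3)) => [|[|[|]]].
  move=> E; move: h8.
  rewrite -(subnK (ltnW hj)) iterD E.
  by case: (iter1 (m - 3 - j)) => ->.
Qed.
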